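(* Let $G$, $P$, $w$ be as in the context, and let $s,t\in V$, $s\neq t$, be such that there is at least one directed path from $s$ to $t$ in $G$. Let $U_s^{\{t,\overline{o}\}}(\alpha)$ be the avoidance hitting cost in the evaporating network $G_\alpha$ (avoided set $B=\emptyset$). Then: (a) $\lim_{\alpha\to 0^+}U_s^{\{t,\overline{o}\}}(\alpha)=L_{st}$, the shortest-path distance from $s$ to $t$ in $G$; (b) if moreover $t$ is reachable from every node reachable from $s$, then at $\alpha=1$, $U_s^{\{t,\overline{o}\}}(1)$ equals the classical hitting cost $U_s^{t}$ of the random walk with transition matrix $P$ on $G$ from $s$ to $t$ (and $U_s^{\{t,\overline{o}\}}(\alpha)\to U_s^t$ as $\alpha\to1^-$); (c) if $0<\alpha_1<\alpha_2\le 1$, then $U_s^{\{t,\overline{o}\}}(\alpha_1)\le U_s^{\{t,\overline{o}\}}(\alpha_2)$.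
   Context: $G=(V,E)$ is a finite directed graph with $n$ nodes; each edge $e_{ij}\in E$ has a positive cost (weight) $w_{ij}$. $P$ is a row-stochastic $n\times n$ transition matrix with $P_{ij}>0$ if and only if $e_{ij}\in E$. $L_{st}$ denotes the minimum total cost of a directed path from $s$ to $t$. Evaporating network: for $\alpha\in(0,1]$, $G_\alpha$ is the Markov chain on $V\cup\{o\}$ ($o$ a new node) with $P_{ij}(\alpha)=P_{ij}\alpha^{w_{ij}}$ for $i,j\in V$, $P_{io}(\alpha)=1-\sum_{j}P_{ij}\alpha^{w_{ij}}$ for $i\in V$, $P_{oo}(\alpha)=1$, $P_{oj}(\alpha)=0$ for $j\neq o$. Avoidance metrics: for a target $t\in V$ and an avoided set $B\subseteq V\setminus\{t\}$, make $t$, $o$ and all nodes of $B$ absorbing in $G_\alpha$; let $\mathcal T=V\setminus(\{t\}\cup B)$. Let $Q_x=Q_x^{\{t,\overline{B\cup\{o\}}\}}(\alpha)$ be the probability that the chain started at $x$ is absorbed at $t$ (so $Q_t=1$, $Q_o=0$, $Q_b=0$ for $b\in B$). Let $F^{\{t\}\cup B\cup\{o\}}(\alpha)=(I-P(\alpha)_{\mathcal T\mathcal T})^{-1}$. For $s,m\in\mathcal T$ with $Q_s>0$, the avoidance fundamental matrix is $F_{sm}^{\{t,\overline{B\cup\{o\}}\}}(\alpha)=F^{\{t\}\cup B\cup\{o\}}_{sm}(\alpha)\,Q_m/Q_s$, and the avoidance hitting cost is $U_s^{\{t,\overline{B\cup\{o\}}\}}(\alpha)=\sum_{m\in\mathcal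 T}F_{sm}^{\{t,\overline{B\cup\{o\}}\}}(\alpha)\,r_m$ with $r_m=\sum_{i:\,e_{mi}\in E}P_{mi}(\alpha)w_{mi}\,Q_i/Q_m$ (terms with $Q_m=0$ omitted). Equivalently, it is the expected total edge cost of the walk from $s$ until absorption, conditioned on being absorbed at $t$. When $B=\emptyset$ these are written $F^{\{t,\overline o\}}$, $U^{\{t,\overline o\}}$, $Q^{\{t,\overline o\}}$. The classical hitting cost $U_s^t$ is the expected total edge cost incurred by the random walk with transition matrix $P$ on $G$ started at $s$ before first hitting $t$. *)

(* Defs.v *)
From Stdlib Require Import Reals Lra List Relations ClassicalEpsilon.
Import ListNotations.
Open Scope R_scope.

(* Nodes of G are 0,...,n-1.  P, w : nat -> nat -> R are the transition
   matrix and edge costs (only entries with indices < n matter). *)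

Fixpoint sumR (n : nat) (f : nat -> R) : R :=
  match n with O => 0 | S m => sumR m f + f m end.

Fixpoint sum_seqs (n k : nat) (f : list nat -> R) : R :=
  match k with
  | O => f nil
  | S k' => sumR n (fun i => sum_seqs n k' (fun l => f (i :: l)))
  end.

Fixpoint walk_weight (p : nat -> nat -> R) (x : nat) (l : list nat) : R :=
  match l with nil => 1 | y :: l' => p x y * walk_weight p y l' end.

Fixpoint walk_cost (w : nat -> nat -> R) (x : nat) (l : list nat) : R :=
  match l with nil => 0 | y :: l' => w x y + walk_cost w y l' end.

Definition edge (n : nat) (P : nat -> nat -> R) (i j : nat) : Prop :=
  (i < n)%nat /\ (j < n)%nat /\ 0 < P i j.

Definition reachable (n : nat) (P : nat -> nat -> R) : nat -> nat -> Prop :=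
  clos_refl_trans nat (edge n P).

Fixpoint is_walk (E : nat -> nat -> Prop) (x : nat) (l : list nat) : Prop :=
  match l with nil => True | y :: l' => E x y /\ is_walk E y l' end.

Definition is_path (n : nat) (P : nat -> nat -> R) (s t : nat) (l : list nat) : Prop :=
  is_walk (edge n P) s l /\ last (s :: l) s = t /\ NoDup (s :: l).

Definition shortest_cost (n : nat) (P w : nat -> nat -> R) (s t : nat) (L : R) : Prop :=
  (exists l, is_path n P s t l /\ walk_cost w s l = L) /\
  (forall l, is_path n P s t l -> L <= walk_cost w s l).

(* value of the series sum_{k>=0} u k (chosen when it converges) *)
Definition series_val (u : nat -> R) : R :=
  epsilon (inhabits 0) (fun L => Un_cv (fun N => sum_f_R0 u N) L).

Definition Pev (P w : nat -> nat -> R) (a : R) (i j : nat) : R :=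
  P i j * Rpower a (w i j).

Definition avoids (t : nat) (s : nat) (l : list nat) : bool :=
  negb (existsb (Nat.eqb t) (s :: l)).

(* Probability that the chain G_alpha from s is absorbed at t after exactly
   k+1 steps (all intermediate states in T = V \ {t}). *)
Definition Q_term (n : nat) (P w : nat -> nat -> R) (s t : nat) (a : R) (k : nat) : R :=
  sum_seqs n k (fun l => if avoids t s l then walk_weight (Pev P w a) s (l ++ [t]) else 0).

(* E[ total edge cost ; absorbed at t after exactly k+1 steps ] *)
Definition C_term (n : nat) (P w : nat -> nat -> R) (s t : nat) (a : R) (k : nat) : R :=
  sum_seqs n k (fun l => if avoids t s l
                         then walk_weight (Pev P w a) s (l ++ [t]) * walk_cost w s (l ++ [t])
                         else 0).

Definition Qabs (n : nat) (P w : nat -> nat -> R) (s t : nat) (a : R) : R :=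
  series_val (Q_term n P w s t a).

(* avoidance hitting cost U_s^{t, not o}(alpha) (B = empty):
   expected total edge cost until absorption, conditioned on absorption at t *)
Definition Uavoid (n : nat) (P w : nat -> nat -> R) (s t : nat) (a : R) : R :=
  series_val (C_term n P w s t a) / Qabs n P w s t a.

(* classical hitting cost U_s^t = E[ sum_{k < tau_t} w(X_k, X_{k+1}) ] for the
   walk with matrix P; term k = E[ w(X_k,X_{k+1}) ; X_0..X_k <> t ]. *)
Definition H_term (n : nat) (P w : nat -> nat -> R) (s t : nat) (k : nat) : R :=
  sum_seqs n k (fun l => if avoids t s l
                         then sumR n (fun j => walk_weight P s (l ++ [j]) * w (last (s :: l) s) j)
                         else 0).

Definition hitting_cost (n : nat) (P w : nat -> nat -> R) (s t : nat) : R :=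
  series_val (H_term n P w s t).

(* Main.v *)
Require Import Defs.
From Stdlib Require Import Reals List Relations.
From Stdlib Require Import Lra Lia ListDec ClassicalEpsilon Arith Bool.
Import ListNotations.
Open Scope R_scope.


Lemma sumR_ext n f g : (forall i, (i < n)%nat -> f i = g i) -> sumR n f = sumR n g.
Proof. induction n; simpl; intros H; auto. rewrite IHn by (intros; apply H; lia). rewrite H by lia; auto. Qed.

Lemma sumR_plus n f g : sumR n (fun i => f i + g i) = sumR n f + sumR n g.
Proof. induction n; simpl; [lra|]. rewrite IHn; lra. Qed.

Lemma sumR_scal n c f : sumR n (fun i => c * f i) = c * sumR n f.
Proof. induction n; simpl; [lra|]. rewrite IHn; lra. Qed.

Lemma sumR_minus n f g : sumR n (fun i => f i - g i) = sumR n f - sumR n g.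
Proof. induction n; simpl; [lra|]. rewrite IHn; lra. Qed.

Lemma sumR_le n f g : (forall i, (i < n)%nat -> f i <= g i) -> sumR n f <= sumR n g.
Proof. induction n; simpl; intros H; [lra|]. pose proof (H n ltac:(lia)). pose proof (IHn ltac:(intros; apply H; lia)). lra. Qed.

Lemma sumR_nonneg n f : (forall i, (i < n)%nat -> 0 <= f i) -> 0 <= sumR n f.
Proof. intros H. replace 0 with (sumR n (fun _ => 0)). apply sumR_le; auto.
  induction n; simpl; auto. rewrite IHn; auto; lra. Qed.

Lemma sumR_ge_term n f j : (forall i, (i < n)%nat -> 0 <= f i) -> (j < n)%nat -> f j <= sumR n f.
Proof. induction n; simpl; intros H Hj; [lia|].
  destruct (Nat.eq_dec j n). subst. pose proof (sumR_nonneg n f ltac:(intros; apply H; lia)). lra.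
  pose proof (IHn ltac:(intros; apply H; lia) ltac:(lia)). pose proof (H n ltac:(lia)). lra. Qed.

Lemma sumR_single n g j : (j < n)%nat -> sumR n (fun i => if Nat.eqb i j then g i else 0) = g j.
Proof. induction n; simpl; intros Hj; [lia|].
  destruct (Nat.eq_dec j n).
  - subst. rewrite Nat.eqb_refl. replace (sumR n _) with 0. lra.
    clear. assert (forall m, (m <= n)%nat -> sumR m (fun i => if Nat.eqb i n then g i else 0) = 0).
    { induction m; simpl; intros; auto. rewrite IHm by lia. destruct (Nat.eqb_spec m n); [lia|lra]. }
    rewrite H; auto.
  - rewrite IHn by lia. destruct (Nat.eqb_spec n j); [lia|lra]. Qed.

Lemma sumR_swap n m f : sumR n (fun i => sumR m (fun j => f i j)) = sumR m (fun j => sumR n (fun i => f i j)).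
Proof. induction n; simpl.
  - induction m; simpl; auto. rewrite <- IHm; lra.
  - rewrite IHn. rewrite <- sumR_plus. auto. Qed.

Lemma sum_f_R0_sumR u N : sum_f_R0 u N = sumR (S N) u.
Proof. induction N as [|N IH]; simpl; [lra|]. rewrite IH; simpl; auto. Qed.

Definition inrn (n : nat) (l : list nat) : Prop := Forall (fun i => (i < n)%nat) l.

Lemma ss_ext n k f g : (forall l, inrn n l -> f l = g l) -> sum_seqs n k f = sum_seqs n k g.
Proof. revert f g; induction k; simpl; intros f g H.
  - apply H. constructor.
  - apply sumR_ext. intros i Hi. apply IHk. intros l Hl. apply H. constructor; auto. Qed.

Lemma ss_plus n k f g : sum_seqs n k (fun l => f l + g l) = sum_seqs n k f + sum_seqs n k g.
Proof. revert f g; induction k; simpl; intros; auto.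
  rewrite <- sumR_plus. apply sumR_ext. intros; apply IHk. Qed.

Lemma ss_scal n k c f : sum_seqs n k (fun l => c * f l) = c * sum_seqs n k f.
Proof. revert f; induction k; simpl; intros; auto.
  rewrite <- sumR_scal. apply sumR_ext. intros; apply IHk. Qed.

Lemma ss_minus n k f g : sum_seqs n k (fun l => f l - g l) = sum_seqs n k f - sum_seqs n k g.
Proof. revert f g; induction k; simpl; intros; auto.
  rewrite <- sumR_minus. apply sumR_ext. intros; apply IHk. Qed.

Lemma ss_le n k f g : (forall l, inrn n l -> f l <= g l) -> sum_seqs n k f <= sum_seqs n k g.
Proof. revert f g; induction k; simpl; intros f g H.
  - apply H. constructor.
  - apply sumR_le. intros i Hi. apply IHk. intros l Hl. apply H. constructor; auto. Qed.

Lemma ss_const0 n k : sum_seqs n k (fun _ => 0) = 0.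
Proof. induction k; simpl; auto. rewrite (sumR_ext _ _ (fun _ => 0)) by (intros; apply IHk). clear. induction n; simpl; auto. rewrite IHn; lra. Qed.

Lemma ss_nonneg n k f : (forall l, inrn n l -> 0 <= f l) -> 0 <= sum_seqs n k f.
Proof. intros H. rewrite <- (ss_const0 n k). apply ss_le; auto. Qed.

Lemma ss_ge n k f l0 : (forall l, inrn n l -> 0 <= f l) -> inrn n l0 -> length l0 = k ->
  f l0 <= sum_seqs n k f.
Proof. revert f l0; induction k; simpl; intros f l0 H Hl Hk.
  - destruct l0; simpl in Hk; try lia. lra.
  - destruct l0 as [|i l0]; simpl in Hk; try lia. inversion Hl; subst.
    eapply Rle_trans; [| apply sumR_ge_term with (j := i); auto].
    + apply (IHk (fun l => f (i :: l))); auto. intros; apply H; constructor; auto.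
    + intros j Hj. apply ss_nonneg. intros; apply H; constructor; auto. Qed.

Lemma ss_app n k1 k2 f : sum_seqs n (k1 + k2) f = sum_seqs n k1 (fun l1 => sum_seqs n k2 (fun l2 => f (l1 ++ l2))).
Proof. revert f; induction k1; simpl; intros; auto. apply sumR_ext; intros; apply IHk1. Qed.

Lemma ss_snoc n k f : sum_seqs n (S k) f = sum_seqs n k (fun l => sumR n (fun j => f (l ++ [j]))).
Proof. replace (S k) with (k + 1)%nat by lia. rewrite ss_app. auto. Qed.

Lemma ss_sumR_swap n m k h : sumR m (fun i => sum_seqs n k (h i)) = sum_seqs n k (fun l => sumR m (fun i => h i l)).
Proof. revert h; induction k; simpl; intros; auto.
  rewrite sumR_swap. apply sumR_ext. intros; apply IHk. Qed.

Lemma ss_swap n k1 k2 g : sum_seqs n k1 (fun l1 => sum_seqs n k2 (fun l2 => g l1 l2)) =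
  sum_seqs n k2 (fun l2 => sum_seqs n k1 (fun l1 => g l1 l2)).
Proof. revert g; induction k1; simpl; intros; auto.
  rewrite (sumR_ext _ _ (fun i => sum_seqs n k2 (fun l2 => sum_seqs n k1 (fun l1 => g (i :: l1) l2)))).
  - apply ss_sumR_swap.
  - intros; apply IHk1. Qed.

Lemma ss_le_len n k f g : (forall l, inrn n l -> length l = k -> f l <= g l) -> sum_seqs n k f <= sum_seqs n k g.
Proof. revert f g; induction k; simpl; intros f g H.
  - apply H. constructor. auto.
  - apply sumR_le. intros i Hi. apply IHk. intros l Hl Hk. apply H. constructor; auto. simpl; auto. Qed.


Lemma last_cons' (l : list nat) y d : last (y :: l) d = last l y.
Proof. revert y d; induction l; intros; simpl; auto. change (last (a::l) d = last (a::l) y). rewrite (IHl a d), (IHl a y). auto. Qed.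

Lemma last_app' (l1 l2 : list nat) x : last (l1 ++ l2) x = last l2 (last l1 x).
Proof. revert x; induction l1; intros; auto. change (last (a :: (l1++l2)) x = last l2 (last (a::l1) x)). rewrite !last_cons'. auto. Qed.

Lemma ww_app p x l1 l2 : walk_weight p x (l1 ++ l2) = walk_weight p x l1 * walk_weight p (last l1 x) l2.
Proof. revert x; induction l1; intros; [simpl; lra|]; cbn [app walk_weight walk_cost]. rewrite IHl1, last_cons'. lra. Qed.

Lemma wc_app w x l1 l2 : walk_cost w x (l1 ++ l2) = walk_cost w x l1 + walk_cost w (last l1 x) l2.
Proof. revert x; induction l1; intros; [simpl; lra|]; cbn [app walk_weight walk_cost]. rewrite IHl1, last_cons'. lra. Qed.

Lemma iw_app (E : nat -> nat -> Prop) x l1 l2 : is_walk E x (l1 ++ l2) <-> is_walk E x l1 /\ is_walk E (last l1 x) l2.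
Proof. revert x; induction l1; intros; [simpl; tauto|]; cbn [app is_walk]. rewrite IHl1, last_cons'. tauto. Qed.

Lemma ww_Pev P w a x l : walk_weight (Pev P w a) x l = walk_weight P x l * exp (walk_cost w x l * ln a).
Proof. revert x; induction l; intros; simpl. rewrite Rmult_0_l, exp_0; lra.
  rewrite IHl. unfold Pev, Rpower. rewrite Rmult_plus_distr_r, exp_plus. lra. Qed.

Lemma inr_app n l1 l2 : inrn n (l1 ++ l2) <-> inrn n l1 /\ inrn n l2.
Proof. unfold inrn. apply Forall_app. Qed.

Lemma inr_last n l x : (x < n)%nat -> inrn n l -> (last l x < n)%nat.
Proof. revert x; induction l; intros; [simpl; auto|]. inversion H0; subst. rewrite last_cons'. apply IHl; auto. Qed.

Lemma avoids_cons t x y l : avoids t x (y :: l) = negb (Nat.eqb t x) && avoids t y l.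
Proof. unfold avoids. simpl. destruct (Nat.eqb t x); simpl; auto. Qed.

Lemma avoids_snoc t x l j : avoids t x (l ++ [j]) = avoids t x l && negb (Nat.eqb t j).
Proof. unfold avoids. simpl. rewrite existsb_app. simpl. rewrite Bool.orb_false_r.
  destruct (Nat.eqb t x), (existsb (Nat.eqb t) l), (Nat.eqb t j); auto. Qed.

Lemma avoids_nil t x : avoids t x [] = negb (Nat.eqb t x).
Proof. unfold avoids; simpl. destruct (Nat.eqb t x); auto. Qed.

Definition Hstoch (n : nat) (P : nat -> nat -> R) :=
  (forall i j, (i < n)%nat -> (j < n)%nat -> 0 <= P i j) /\
  (forall i, (i < n)%nat -> sumR n (fun j => P i j) = 1).

Lemma P_le1 n P i j : Hstoch n P -> (i < n)%nat -> (j < n)%nat -> P i j <= 1.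
Proof. intros [H1 H2] Hi Hj. rewrite <- (H2 i Hi). apply (sumR_ge_term n (fun j => P i j)); auto. Qed.

Lemma ww_nonneg n P x l : Hstoch n P -> (x < n)%nat -> inrn n l -> 0 <= walk_weight P x l.
Proof. intros HS. revert x; induction l; intros; simpl; [lra|]. inversion H0; subst.
  apply Rmult_le_pos; [apply HS|apply IHl]; auto. Qed.

Lemma ww_le1 n P x l : Hstoch n P -> (x < n)%nat -> inrn n l -> walk_weight P x l <= 1.
Proof. intros HS. revert x; induction l; intros; simpl; [lra|]. inversion H0; subst.
  pose proof (IHl a H3 H4). pose proof (ww_nonneg n P a l HS H3 H4).
  pose proof (P_le1 n P x a HS H H3). pose proof (proj1 HS x a H H3).
  apply Rle_trans with (P x a * 1); [apply Rmult_le_compat_l|]; lra. Qed.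

Lemma ww_edge n P x l : Hstoch n P -> (x < n)%nat -> inrn n l -> walk_weight P x l <> 0 -> is_walk (edge n P) x l.
Proof. intros HS. revert x; induction l; intros; simpl; auto. inversion H0; subst. simpl in H1.
  split. repeat split; auto. destruct (proj1 HS x a H H4) as [Hl|He]; auto. rewrite <- He in H1; lra.
  apply IHl; auto. intro E; rewrite E in H1; lra. Qed.

Lemma walk_pos n P x l : is_walk (edge n P) x l -> 0 < walk_weight P x l.
Proof. revert x; induction l; intros; simpl; [lra|]. destruct H as [[_ [_ Hp]] Hw].
  apply Rmult_lt_0_compat; auto. Qed.

Lemma walk_inr n P x l : is_walk (edge n P) x l -> inrn n l.
Proof. revert x; induction l; intros; simpl. constructor. destruct H as [[_ [Ha _]] Hw]; constructor; [exact Ha| eapply IHl; eauto]. Qed.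

Lemma walk_reach n P x l : is_walk (edge n P) x l -> reachable n P x (last l x).
Proof. revert x; induction l; intros. simpl; apply rt_refl. destruct H.
  rewrite last_cons'. eapply rt_trans. apply rt_step; eauto. apply IHl; auto. Qed.

Definition Hcost (n : nat) (P w : nat -> nat -> R) :=
  forall i j, (i < n)%nat -> (j < n)%nat -> 0 < P i j -> 0 < w i j.

Lemma cost_nonneg n P w x l : Hcost n P w -> is_walk (edge n P) x l -> 0 <= walk_cost w x l.
Proof. intros Hc. revert x; induction l; intros; simpl; [lra|]. destruct H as [[H1 [H2 H3]] Hw].
  pose proof (Hc x a H1 H2 H3). pose proof (IHl a Hw). lra. Qed.

Lemma wc_nonneg n P w x l : Hstoch n P -> Hcost n P w -> (x < n)%nat -> inrn n l ->
  0 <= walk_weight P x l * walk_cost w x l.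
Proof. intros HS Hc Hx Hl. destruct (Req_dec (walk_weight P x l) 0) as [E|E].
  rewrite E; lra. apply Rmult_le_pos. apply (ww_nonneg n); auto.
  apply cost_nonneg with n P; auto. apply (ww_edge n); auto. Qed.

Definition wmax n (w : nat -> nat -> R) := sumR n (fun i => sumR n (fun j => Rabs (w i j))).

Lemma wmax_bound n w i j : (i < n)%nat -> (j < n)%nat -> Rabs (w i j) <= wmax n w.
Proof. intros. unfold wmax. eapply Rle_trans; [|apply (sumR_ge_term n _ i)]; auto.
  apply (sumR_ge_term n (fun j => Rabs (w i j))); auto. intros; apply Rabs_pos.
  intros. apply sumR_nonneg. intros; apply Rabs_pos. Qed.

Lemma wmax_nonneg n w : 0 <= wmax n w.
Proof. apply sumR_nonneg; intros; apply sumR_nonneg; intros; apply Rabs_pos. Qed.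

Lemma cost_bound n w x l : (x < n)%nat -> inrn n l -> Rabs (walk_cost w x l) <= INR (length l) * wmax n w.
Proof. revert x; induction l; intros. simpl; rewrite Rabs_R0; lra. inversion H0; subst.
  cbn [walk_cost length]. rewrite S_INR. pose proof (IHl a H3 H4). pose proof (wmax_bound n w x a H H3).
  pose proof (Rabs_triang (w x a) (walk_cost w a l)). lra. Qed.


Lemma shortcut n P w s X Y Z : Hcost n P w -> is_walk (edge n P) s (X ++ Y ++ Z) ->
  last Y (last X s) = last X s ->
  is_walk (edge n P) s (X ++ Z) /\ walk_cost w s (X ++ Z) <= walk_cost w s (X ++ Y ++ Z) /\
  last (X ++ Z) s = last (X ++ Y ++ Z) s.
Proof. intros Hc HW HL. apply iw_app in HW. destruct HW as [HX HYZ]. apply iw_app in HYZ. destruct HYZ as [HY HZ].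
  rewrite HL in HZ. split; [apply iw_app; auto|]. split.
  - rewrite !wc_app. rewrite HL. pose proof (cost_nonneg n P w _ Y Hc HY). lra.
  - rewrite !last_app'. rewrite HL. auto. Qed.

Lemma erase n P w s t : Hcost n P w -> forall m l, (length l <= m)%nat -> is_walk (edge n P) s l ->
  last l s = t -> exists l', is_path n P s t l' /\ walk_cost w s l' <= walk_cost w s l.
Proof. intros Hc m. induction m; intros l Hlen HW HL.
  - destruct l; simpl in Hlen; try lia. exists []. split; [|lra]. split; simpl; auto. split; auto.
    constructor; [intro H; inversion H| constructor].
  - destruct (NoDup_dec Nat.eq_dec (s :: l)) as [ND|ND].
    + exists l. split; [|lra]. split; auto. split; auto. rewrite last_cons'; auto.
    + destruct (not_NoDup dec_eq_nat ND) as [a [l1 [l2 [l3 E]]]].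
      assert (exists X Y Z, l = X ++ Y ++ Z /\ Y <> [] /\ last Y (last X s) = last X s) as [X [Y [Z [E2 [HY HXY]]]]].
      { destruct l1 as [|b l1'].
        - simpl in E. injection E as Hs Hl. subst a l. exists [], (l2 ++ [s]), l3. split.
          rewrite <- app_assoc. simpl. auto. split. destruct l2; simpl; discriminate.
          simpl. rewrite last_app'. simpl. auto.
        - simpl in E. injection E as Hs Hl. subst b l. exists (l1' ++ [a]), (l2 ++ [a]), l3. split.
          rewrite <- !app_assoc. simpl. auto. split. destruct l2; simpl; discriminate.
          rewrite !last_app'. simpl. auto. }
      subst l. destruct (shortcut n P w s X Y Z Hc HW HXY) as [HW' [Hc' HL']].
      destruct (IHm (X ++ Z)) as [l' [Hp Hcl]]; auto.
      * rewrite !length_app in *. destruct Y; [congruence|]. simpl in Hlen. lia.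
      * rewrite HL'; auto.
      * exists l'. split; auto. lra. Qed.

Lemma avoid_walk n P x t : reachable n P x t -> x <> t ->
  exists l, avoids t x l = true /\ is_walk (edge n P) x (l ++ [t]).
Proof. intros H. apply clos_rt_rt1n in H. induction H; intros Hne. congruence.
  destruct (Nat.eq_dec y z).
  - subst. exists []. split. rewrite avoids_nil. destruct (Nat.eqb_spec z x); auto; try congruence.
    simpl. auto.
  - destruct (IHclos_refl_trans_1n n0) as [l [Ha Hw]]. exists (y :: l). split.
    rewrite avoids_cons, Ha. destruct (Nat.eqb_spec z x); auto; try congruence.
    simpl. auto. Qed.


Lemma pow_le1 x k : 0 <= x <= 1 -> x ^ k <= 1.
Proof. intros H; induction k; simpl; [lra|]. pose proof (pow_le x k (proj1 H)). nra. Qed.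

Lemma geo (A : nat -> R) D r : (1 <= D)%nat -> 0 < r < 1 -> (forall k, 0 <= A k <= 1) ->
  (forall k, A (k + D)%nat <= r * A k) -> exists rho, 0 < rho < 1 /\ forall k, A k <= rho ^ k / r.
Proof. intros HD Hr HA Hdec.
  set (rho := Rpower r (/ INR D)).
  assert (HDpos : 0 < INR D) by (apply lt_0_INR; lia).
  assert (Hrho : 0 < rho < 1).
  { unfold rho, Rpower. split. apply exp_pos. rewrite <- exp_0. apply exp_increasing.
    assert (ln r < 0) by (rewrite <- ln_1; apply ln_increasing; lra).
    assert (0 < / INR D) by (apply Rinv_0_lt_compat; auto). nra. }
  assert (HrD : rho ^ D = r).
  { rewrite <- Rpower_pow by lra. unfold rho. rewrite Rpower_mult. rewrite Rinv_l by lra. apply Rpower_1; lra. }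
  exists rho. split; auto.
  assert (forall m k, (k <= m)%nat -> A k <= rho ^ k / r).
  { induction m; intros k Hk.
    - assert (k = 0)%nat by lia; subst k. simpl. pose proof (HA 0%nat).
      apply Rle_trans with 1; [lra|]. unfold Rdiv. rewrite Rmult_1_l.
      rewrite <- Rinv_1 at 1. apply Rinv_le_contravar; lra.
    - destruct (Nat.lt_ge_cases k D) as [Hl|Hge].
      + pose proof (HA k). apply Rle_trans with 1; [lra|].
        assert (r <= rho ^ k).
        { rewrite <- HrD. replace D with (k + (D - k))%nat by lia. rewrite pow_add.
          pose proof (pow_le1 rho (D - k) ltac:(lra)). pose proof (pow_lt rho k (proj1 Hrho)). nra. }
        apply (Rmult_le_reg_r r); [lra|]. unfold Rdiv. rewrite Rmult_assoc, Rinv_l; lra.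
      + replace k with ((k - D) + D)%nat by lia. eapply Rle_trans; [apply Hdec|].
        pose proof (IHm (k - D)%nat ltac:(lia)). rewrite pow_add, HrD.
        unfold Rdiv in *. replace (rho ^ (k - D) * r * / r) with (rho ^ (k - D)) by (field; lra).
        replace (rho ^ (k - D)) with (r * (rho ^ (k-D) * / r)) by (field; lra).
        apply Rmult_le_compat_l; lra. }
  intros k; apply (H k k); auto. Qed.

Lemma sum_krho N rho : 0 < rho < 1 ->
  sum_f_R0 (fun k => INR (S k) * rho ^ k) N <= / (1 - rho) ^ 2.
Proof. intros Hr.
  assert (E : forall N, sum_f_R0 (fun k => INR (S k) * rho ^ k) N * (1 - rho) ^ 2 =
     1 - INR (N + 2) * rho ^ (S N) + INR (N + 1) * rho ^ (S (S N))).
  { induction N0.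
    - simpl. lra.
    - rewrite tech5, Rmult_plus_distr_r, IHN0. replace (S N0 + 2)%nat with (S (N0 + 2)) by lia.
      replace (S N0 + 1)%nat with (S (N0 + 1)) by lia. rewrite !S_INR.
      replace (N0 + 2)%nat with (S (S N0)) by lia. replace (N0 + 1)%nat with (S N0) by lia.
      rewrite !S_INR. simpl. ring. }
  pose proof (E N). replace (N + 2)%nat with (S (N + 1)) in H by lia. rewrite S_INR in H.
  assert (0 < (1 - rho) ^ 2) by (apply pow_lt; lra).
  assert (INR (N + 1) * rho ^ S (S N) <= (INR (N+1) + 1) * rho ^ S N).
  { replace (rho ^ S (S N)) with (rho * rho ^ S N) by (simpl; ring).
    pose proof (pos_INR (N+1)). pose proof (pow_lt rho (S N) (proj1 Hr)).
    assert (0 <= INR (N+1) * rho ^ S N * (1 - rho)) by (apply Rmult_le_pos; [apply Rmult_le_pos|]; lra). nra. }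
  apply (Rmult_le_reg_r ((1 - rho) ^ 2)); auto. rewrite Rinv_l by lra. lra. Qed.


Definition Sx n P t x := (x < n)%nat /\ x <> t /\ reachable n P x t.
Definition cS n P t x : R := if excluded_middle_informative (Sx n P t x) then 1 else 0.
Definition PS n P t i j := P i j * cS n P t j.
Definition gS n P t x j := cS n P t x * sum_seqs n j (walk_weight (PS n P t) x).

Lemma cS01 n P t x : cS n P t x = 0 \/ cS n P t x = 1.
Proof. unfold cS. destruct excluded_middle_informative; auto. Qed.

Lemma cS_t n P t : cS n P t t = 0.
Proof. unfold cS. destruct excluded_middle_informative as [[_ [H _]]|]; auto. congruence. Qed.

Lemma cS_1 n P t x : Sx n P t x -> cS n P t x = 1.
Proof. unfold cS. destruct excluded_middle_informative; tauto. Qed.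

Lemma cS_0 n P t x : ~ Sx n P t x -> cS n P t x = 0.
Proof. unfold cS. destruct excluded_middle_informative; tauto. Qed.

Lemma ww_nonneg_gen n p x l : (forall i j, (i < n)%nat -> (j < n)%nat -> 0 <= p i j) ->
  (x < n)%nat -> inrn n l -> 0 <= walk_weight p x l.
Proof. intros HS. revert x; induction l; intros; simpl; [lra|]. inversion H0; subst.
  apply Rmult_le_pos; [apply HS|apply IHl]; auto. Qed.

Lemma PS_nonneg n P t : Hstoch n P -> forall i j, (i < n)%nat -> (j < n)%nat -> 0 <= PS n P t i j.
Proof. intros HS i j Hi Hj. unfold PS. destruct (cS01 n P t j) as [E|E]; rewrite E;
  pose proof (proj1 HS i j Hi Hj); lra. Qed.

Lemma ss_PS_rec n P t x j : sum_seqs n (S j) (walk_weight (PS n P t) x) = sumR n (fun i => P x i * gS n P t i j).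
Proof. simpl. apply sumR_ext. intros i Hi. unfold gS.
  rewrite <- Rmult_assoc. rewrite <- ss_scal. apply ss_ext. intros; simpl. unfold PS. ring. Qed.

Lemma f_bounds n P t : Hstoch n P -> forall j x, (x < n)%nat ->
  0 <= sum_seqs n j (walk_weight (PS n P t) x) <= 1 /\ 0 <= gS n P t x j <= 1.
Proof. intros HS. induction j; intros x Hx.
  - simpl. unfold gS; simpl. destruct (cS01 n P t x) as [E|E]; rewrite E; lra.
  - assert (Hf : 0 <= sum_seqs n (S j) (walk_weight (PS n P t) x) <= 1).
    { rewrite ss_PS_rec. split.
      - apply sumR_nonneg. intros i Hi. apply Rmult_le_pos. apply HS; auto. apply IHj; auto.
      - rewrite <- (proj2 HS x Hx). apply sumR_le. intros i Hi. pose proof (proj1 HS x i Hx Hi).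
        pose proof (proj2 (IHj i Hi)). nra. }
    split; auto. unfold gS. destruct (cS01 n P t x) as [E|E]; rewrite E; lra. Qed.

Lemma g_path n P t : Hstoch n P -> forall p x, (x < n)%nat -> is_walk (edge n P) x p -> last p x = t ->
  forall e, gS n P t x (length p + e) <= 1 - walk_weight P x p.
Proof. intros HS. induction p as [|y p IH]; intros x Hx HW HL e.
  - simpl in HL. subst. unfold gS. rewrite cS_t. simpl. lra.
  - destruct HW as [[_ [Hy Hxy]] HW]. rewrite last_cons' in HL.
    pose proof (IH y Hy HW HL e) as Hg.
    cbn [length walk_weight]. replace (S (length p) + e)%nat with (S (length p + e)) by lia.
    unfold gS at 1. rewrite ss_PS_rec.
    set (G := fun i => gS n P t i (length p + e)).
    assert (Hs : sumR n (fun i => P x i * G i) <= 1 - P x y * walk_weight P y p).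
    { assert (sumR n (fun i => P x i * (1 - G i)) >= P x y * (1 - G y)).
      { apply Rle_ge. apply (sumR_ge_term n (fun i => P x i * (1 - G i))); auto.
        intros i Hi. apply Rmult_le_pos. apply HS; auto. pose proof (proj2 (f_bounds n P t HS (length p + e) i Hi)).
        unfold G. lra. }
      replace (sumR n (fun i => P x i * G i)) with (sumR n (fun i => P x i) - sumR n (fun i => P x i * (1 - G i))).
      rewrite (proj2 HS x Hx). assert (G y <= 1 - walk_weight P y p) by exact Hg.
      assert (P x y * (1 - G y) >= P x y * walk_weight P y p) by (apply Rle_ge; apply Rmult_le_compat_l; lra). lra.
      rewrite <- sumR_minus. apply sumR_ext. intros; ring. }
    assert (0 <= sumR n (fun i => P x i * G i)).
    { apply sumR_nonneg. intros i Hi. apply Rmult_le_pos. apply HS; auto. apply (f_bounds n P t HS); auto. }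
    change (sumR n (fun i => P x i * gS n P t i (length p + e))) with (sumR n (fun i => P x i * G i)).
    pose proof (walk_pos n P y p HW). pose proof (P_le1 n P x y HS Hx Hy).
    pose proof (ww_le1 n P y p HS Hy (walk_inr n P y p HW)).
    assert (P x y * walk_weight P y p <= 1) by nra.
    destruct (cS01 n P t x) as [E|E]; rewrite E; nra. Qed.

Lemma ww_PS_last n P t x l : cS n P t x = 1 ->
  walk_weight (PS n P t) x l = walk_weight (PS n P t) x l * cS n P t (last l x).
Proof. revert x; induction l as [|y l IH]; intros x Hx. simpl. rewrite Hx; ring.
  rewrite last_cons'. cbn [walk_weight]. unfold PS at 1 3. destruct (cS01 n P t y) as [E|E].
  rewrite E; ring. rewrite (IH y E) at 1. ring. Qed.

Lemma uniform (G : nat -> nat -> R) (Pr : nat -> Prop) N :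
  (forall x, (x < N)%nat -> exists d om, 0 < om /\ forall e, Pr x -> G x (d + e)%nat <= 1 - om) ->
  exists D dl, 0 < dl /\ forall x e, (x < N)%nat -> Pr x -> G x (D + e)%nat <= 1 - dl.
Proof. induction N; intros H.
  - exists O, 1. split; [lra|]. intros; lia.
  - destruct IHN as [D [dl [Hdl HD]]]. intros; apply H; lia.
    destruct (H N ltac:(lia)) as [d [om [Hom Hd]]].
    exists (D + d)%nat, (Rmin dl om). split. apply Rmin_pos; auto.
    intros x e Hx Hp. destruct (Nat.eq_dec x N).
    + subst. replace (D + d + e)%nat with (d + (D + e))%nat by lia. pose proof (Hd (D + e)%nat Hp).
      pose proof (Rmin_r dl om). lra.
    + replace (D + d + e)%nat with (D + (d + e))%nat by lia. pose proof (HD x (d + e)%nat ltac:(lia) Hp).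
      pose proof (Rmin_l dl om). lra. Qed.

Lemma decay n P t s : Hstoch n P -> Sx n P t s ->
  exists rho K, 0 < rho < 1 /\ 0 <= K /\ forall k, sum_seqs n k (walk_weight (PS n P t) s) <= K * rho ^ k.
Proof. intros HS Hs.
  destruct (uniform (gS n P t) (Sx n P t) n) as [D [dl [Hdl HD]]].
  { intros x Hx. destruct (excluded_middle_informative (Sx n P t x)) as [Hsx|Hsx].
    - destruct Hsx as [_ [Hxt Hr]]. apply clos_rt_rt1n in Hr.
      assert (exists p, is_walk (edge n P) x p /\ last p x = t) as [p [Hp Hl]].
      { clear -Hr. induction Hr. exists []; simpl; auto. destruct IHHr as [p [Hp Hl]].
        exists (y :: p). split. split; auto. rewrite last_cons'; auto. }
      exists (length p), (walk_weight P x p). split. apply (walk_pos n); auto.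
      intros e _. apply g_path; auto.
    - exists O, 1. split; [lra|]. intros; tauto. }
  set (A := fun k => sum_seqs n k (walk_weight (PS n P t) s)).
  assert (HsN : (s < n)%nat) by apply Hs.
  assert (HA : forall k, 0 <= A k <= 1) by (intros; apply (f_bounds n P t HS); auto).
  assert (Hdl1 : dl <= 1).
  { pose proof (HD s O HsN Hs). pose proof (proj2 (f_bounds n P t HS (D + 0) s HsN)). lra. }
  assert (Hdec : forall k, A (k + S D)%nat <= (1 - dl / 2) * A k).
  { intros k. unfold A. rewrite ss_app.
    assert (forall l1, inrn n l1 -> sum_seqs n (S D) (fun l2 => walk_weight (PS n P t) s (l1 ++ l2)) <=
        (1 - dl) * walk_weight (PS n P t) s l1).
    { intros l1 Hl1. rewrite (ss_ext _ _ _ (fun l2 => walk_weight (PS n P t) s l1 * walk_weight (PS n P t) (last l1 s) l2))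
        by (intros; apply ww_app).
      rewrite ss_scal. pose proof (ww_nonneg_gen n _ s l1 (PS_nonneg n P t HS) HsN Hl1) as Hw0.
      pose proof (inr_last n l1 s HsN Hl1) as Hln.
      destruct (excluded_middle_informative (Sx n P t (last l1 s))) as [Hls|Hls].
      - pose proof (HD (last l1 s) 1%nat Hln Hls) as H2. unfold gS in H2. rewrite (cS_1 _ _ _ _ Hls) in H2.
        replace (D + 1)%nat with (S D) in H2 by lia. rewrite Rmult_1_l in H2. nra.
      - rewrite (ww_PS_last n P t s l1 (cS_1 _ _ _ _ Hs)), (cS_0 _ _ _ _ Hls). lra. }
    eapply Rle_trans. apply ss_le. apply H. rewrite ss_scal.
    pose proof (HA k). unfold A in H0. nra. }
  destruct (geo A (S D) (1 - dl/2) ltac:(lia) ltac:(lra) HA Hdec) as [rho [Hrho Hb]].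
  exists rho, (/ (1 - dl/2)). split; auto. split. left. apply Rinv_0_lt_compat. lra.
  intros k. pose proof (Hb k). unfold A, Rdiv in H. lra. Qed.


Definition Hyp n P w s t := Hstoch n P /\ Hcost n P w /\ (s < n)%nat /\ (t < n)%nat /\ s <> t /\ reachable n P s t.

Definition F (P : nat -> nat -> R) (s t : nat) (l : list nat) : R := if avoids t s l then walk_weight P s (l ++ [t]) else 0.
Definition cst (w : nat -> nat -> R) s t l := walk_cost w s (l ++ [t]).
Definition T n P w s t (h : R -> R) k := sum_seqs n k (fun l => F P s t l * h (cst w s t l)).
Definition Ea a c := exp (c * ln a).

Lemma Q_T n P w s t a k : Q_term n P w s t a k = T n P w s t (Ea a) k.
Proof. unfold Q_term, T. apply ss_ext. intros l _. unfold F, cst, Ea. destruct avoids; [|lra].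
  rewrite ww_Pev. auto. Qed.

Lemma C_T n P w s t a k : C_term n P w s t a k = T n P w s t (fun c => Ea a c * c) k.
Proof. unfold C_term, T. apply ss_ext. intros l _. unfold F, cst, Ea. destruct avoids; [|lra].
  rewrite ww_Pev. ring. Qed.

Lemma ss_scal_r n k c f : sum_seqs n k (fun l => f l * c) = sum_seqs n k f * c.
Proof. rewrite Rmult_comm, <- ss_scal. apply ss_ext; intros; ring. Qed.

Lemma inr_snoc n l t : inrn n l -> (t < n)%nat -> inrn n (l ++ [t]).
Proof. intros. apply inr_app; split; auto. constructor; auto. Qed.

Lemma F_nonneg n P w s t l : Hyp n P w s t -> inrn n l -> 0 <= F P s t l.
Proof. intros (HS & Hc & Hs & Ht & _) Hl. unfold F. destruct avoids; [|lra].
  apply (ww_nonneg n); auto. apply inr_snoc; auto. Qed.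

Lemma F_walk n P w s t l : Hyp n P w s t -> inrn n l -> F P s t l <> 0 ->
  avoids t s l = true /\ is_walk (edge n P) s (l ++ [t]).
Proof. intros (HS & Hc & Hs & Ht & _) Hl HF. unfold F in HF. destruct (avoids t s l) eqn:E; [|lra].
  split; auto. apply (ww_edge n); auto. apply inr_snoc; auto. Qed.

Lemma F_cst_nonneg n P w s t l : Hyp n P w s t -> inrn n l -> F P s t l <> 0 -> 0 <= cst w s t l.
Proof. intros H Hl HF. destruct (F_walk n P w s t l H Hl HF). unfold cst.
  apply cost_nonneg with n P; auto. apply H. Qed.

Lemma cst_bound n P w s t l : Hyp n P w s t -> inrn n l -> Rabs (cst w s t l) <= INR (S (length l)) * wmax n w.
Proof. intros (HS & Hc & Hs & Ht & _) Hl. unfold cst. eapply Rle_trans. apply (cost_bound n); auto.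
  apply inr_snoc; auto. rewrite length_app; cbn [length]; rewrite Nat.add_1_r; lra. Qed.

Lemma F_le_PS_gen n P t x l : Hstoch n P -> (t < n)%nat -> (x < n)%nat -> x <> t -> inrn n l ->
  (if avoids t x l then walk_weight P x (l ++ [t]) else 0) <= walk_weight (PS n P t) x l.
Proof. intros HS Ht. revert x; induction l as [|y l IH]; intros x Hx Hxt Hl.
  - rewrite avoids_nil. destruct (Nat.eqb_spec t x); [congruence|]. simpl.
    pose proof (P_le1 n P x t HS Hx Ht). lra.
  - inversion Hl; subst. rewrite avoids_cons. destruct (Nat.eqb_spec t x); [congruence|]. simpl negb. cbn [andb].
    cbn [app walk_weight]. unfold PS.
    pose proof (ww_nonneg_gen n (PS n P t) y l (PS_nonneg n P t HS) H1 H2).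
    pose proof (proj1 HS x y Hx H1).
    destruct (Nat.eq_dec y t) as [Eyt|Nyt].
    + subst y. unfold avoids. cbn [existsb]. rewrite Nat.eqb_refl. cbn [orb negb]. rewrite cS_t. lra.
    + destruct (excluded_middle_informative (Sx n P t y)) as [Hy|Hy].
      * rewrite (cS_1 _ _ _ _ Hy). pose proof (IH y H1 Nyt H2).
        unfold PS in *. destruct (avoids t y l); cbv beta iota in *; nra.
      * rewrite (cS_0 _ _ _ _ Hy). destruct (avoids t y l); [|lra].
        destruct (Req_dec (walk_weight P y (l ++ [t])) 0) as [Z|Z]. rewrite Z; lra.
        exfalso. apply Hy. split; auto. split; auto.
        assert (Hlt : inrn n (l ++ [t])) by (apply inr_snoc; auto).
        pose proof (walk_reach n P y (l ++ [t]) (ww_edge n P y _ HS H1 Hlt Z)) as Hre.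
        rewrite last_app' in Hre. simpl in Hre. auto. Qed.

Lemma F_le_PS n P w s t l : Hyp n P w s t -> inrn n l -> F P s t l <= walk_weight (PS n P t) s l.
Proof. intros (HS & Hc & Hs & Ht & Hst & _) Hl. apply F_le_PS_gen; auto. Qed.

Lemma T_le n P w s t h1 h2 k : Hyp n P w s t -> (forall c, 0 <= c -> h1 c <= h2 c) -> T n P w s t h1 k <= T n P w s t h2 k.
Proof. intros H Hh. apply ss_le. intros l Hl. pose proof (F_nonneg n P w s t l H Hl).
  destruct (Req_dec (F P s t l) 0) as [Z|Z]. rewrite Z; lra.
  apply Rmult_le_compat_l; auto. apply Hh. apply (F_cst_nonneg n P w s t l H Hl Z). Qed.

Lemma T_lin n P w s t h1 h2 al be k :
  T n P w s t (fun c => al * h1 c + be * h2 c) k = al * T n P w s t h1 k + be * T n P w s t h2 k.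
Proof. unfold T. rewrite <- !ss_scal, <- ss_plus. apply ss_ext; intros; ring. Qed.

Lemma T_ext n P w s t h1 h2 k : (forall c, h1 c = h2 c) -> T n P w s t h1 k = T n P w s t h2 k.
Proof. intros E. unfold T. apply ss_ext; intros; rewrite E; auto. Qed.

Lemma T_dom n P w s t : Hyp n P w s t -> exists rho K, 0 < rho < 1 /\ 0 <= K /\
  forall h k, (forall c, 0 <= c -> 0 <= h c <= 1 + c) -> 0 <= T n P w s t h k <= K * INR (S k) * rho ^ k.
Proof. intros H. destruct H as (HS & Hc & Hs & Ht & Hst & Hr) eqn:HH. clear HH.
  destruct (decay n P t s HS) as [rho [K [Hrho [HK Hd]]]]. repeat split; auto.
  exists rho, (K * (1 + wmax n w)). split; auto. split. pose proof (wmax_nonneg n w). nra.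
  intros h k Hh. split.
  - apply ss_nonneg. intros l Hl. pose proof (F_nonneg n P w s t l H Hl).
    destruct (Req_dec (F P s t l) 0) as [Z|Z]. rewrite Z; lra.
    apply Rmult_le_pos; auto. apply Hh. apply (F_cst_nonneg n P w s t l H Hl Z).
  - unfold T. pose proof (wmax_nonneg n w) as Hw0. pose proof (pos_INR k) as Hk0. eapply Rle_trans.
    + apply ss_le_len with (g := fun l => walk_weight (PS n P t) s l * (1 + INR (S k) * wmax n w)).
      intros l Hl Hlen. pose proof (F_nonneg n P w s t l H Hl). pose proof (F_le_PS n P w s t l H Hl).
      pose proof (ww_nonneg_gen n (PS n P t) s l (PS_nonneg n P t HS) Hs Hl).
      rewrite S_INR in *.
      destruct (Req_dec (F P s t l) 0) as [Z|Z]. rewrite Z. rewrite Rmult_0_l. apply Rmult_le_pos; auto. nra.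
      pose proof (F_cst_nonneg n P w s t l H Hl Z). pose proof (Hh _ H3).
      pose proof (cst_bound n P w s t l H Hl). rewrite Hlen, S_INR in H5. rewrite Rabs_right in H5 by lra.
      apply Rmult_le_compat; try lra.
    + rewrite ss_scal_r. rewrite Rmult_comm. pose proof (Hd k).
      pose proof (pow_lt rho k (proj1 Hrho)). rewrite S_INR.
      assert (1 + (INR k + 1) * wmax n w <= (1 + wmax n w) * (INR k + 1)) by nra.
      apply Rle_trans with ((1 + (INR k + 1) * wmax n w) * (K * rho ^ k)).
      apply Rmult_le_compat_l; nra. 
      replace (K * (1 + wmax n w) * (INR k + 1) * rho ^ k) with (((1 + wmax n w) * (INR k + 1)) * (K * rho ^ k)) by ring.
      apply Rmult_le_compat_r; nra.
Qed.


Lemma sv_eq u l : Un_cv (fun N => sum_f_R0 u N) l -> series_val u = l.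
Proof. intros H. unfold series_val.
  assert (Hex : exists L, Un_cv (fun N => sum_f_R0 u N) L) by (exists l; auto).
  pose proof (epsilon_spec (inhabits 0) _ Hex). eapply UL_sequence; eauto. Qed.

Lemma Un_cv_ext u v l : (forall N, u N = v N) -> Un_cv u l -> Un_cv v l.
Proof. intros E H eps He. destruct (H eps He) as [N HN]. exists N. intros m Hm. rewrite <- E. auto. Qed.

Lemma Un_cv_shift u l : Un_cv u l -> Un_cv (fun N => u (S N)) l.
Proof. intros H eps He. destruct (H eps He) as [N HN]. exists N. intros m Hm. apply HN. lia. Qed.

Lemma CV_const c : Un_cv (fun _ => c) c.
Proof. intros eps He. exists O. intros. unfold Rdist. rewrite Rminus_diag, Rabs_R0; auto. Qed.

Lemma cv_bounded u B : (forall k, 0 <= u k) -> (forall N, sum_f_R0 u N <= B) ->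
  exists l, Un_cv (fun N => sum_f_R0 u N) l.
Proof. intros H0 HB. destruct (growing_cv (fun N => sum_f_R0 u N)) as [l Hl].
  - intros N. simpl. pose proof (H0 (S N)). lra.
  - exists B. intros x [N E]. subst. auto.
  - exists l; auto. Qed.

Lemma psum_le_lim u l N : (forall k, 0 <= u k) -> Un_cv (fun N => sum_f_R0 u N) l -> sum_f_R0 u N <= l.
Proof. intros H0 H. apply (growing_ineq (fun N => sum_f_R0 u N)); auto.
  intros m. simpl. pose proof (H0 (S m)). lra. Qed.

Lemma term_le_psum u N : (forall k, 0 <= u k) -> u N <= sum_f_R0 u N.
Proof. intros H0. destruct N; simpl. lra. pose proof (cond_pos_sum u N H0). lra. Qed.

Lemma terms_to0 u l : Un_cv (fun N => sum_f_R0 u N) l -> Un_cv (fun N => u (S N)) 0.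
Proof. intros H. assert (Un_cv (fun N => sum_f_R0 u (S N) - sum_f_R0 u N) (l - l)).
  apply CV_minus; auto. apply (Un_cv_shift (fun N => sum_f_R0 u N)); auto.
  replace 0 with (l - l) by ring. eapply Un_cv_ext; [|exact H0]. intros N. simpl. ring. Qed.

Lemma sum_f_lin al be u v N : sum_f_R0 (fun k => al * u k + be * v k) N = al * sum_f_R0 u N + be * sum_f_R0 v N.
Proof. rewrite !sum_f_R0_sumR, sumR_plus, !sumR_scal. auto. Qed.

Definition adm (h : R -> R) := forall c, 0 <= c -> 0 <= h c <= 1 + c.

Lemma T_nonneg n P w s t h k : Hyp n P w s t -> adm h -> 0 <= T n P w s t h k.
Proof. intros H Hh. destruct (T_dom n P w s t H) as [rho [K [_ [_ Hd]]]]. apply (Hd h k Hh). Qed.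

Lemma T_cv n P w s t h : Hyp n P w s t -> adm h -> exists X, Un_cv (fun N => sum_f_R0 (T n P w s t h) N) X.
Proof. intros H Hh. destruct (T_dom n P w s t H) as [rho [K [Hr [HK Hd]]]].
  apply cv_bounded with (K * / (1 - rho) ^ 2).
  - intros k; apply (Hd h k Hh).
  - intros N. eapply Rle_trans. apply sum_Rle with (Bn := fun k => K * (INR (S k) * rho ^ k)).
    intros k _. rewrite <- Rmult_assoc. apply (Hd h k Hh).
    replace (sum_f_R0 (fun k => K * (INR (S k) * rho ^ k)) N) with
      (K * sum_f_R0 (fun k => INR (S k) * rho ^ k) N) by (rewrite !sum_f_R0_sumR, sumR_scal; auto).
    apply Rmult_le_compat_l; auto.
    apply sum_krho; auto. Qed.

Lemma Un_cv_unshift u l : Un_cv (fun N => u (S N)) l -> Un_cv u l.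
Proof. intros H eps He. destruct (H eps He) as [N HN]. exists (S N). intros m Hm.
  destruct m; [lia|]. apply HN. lia. Qed.

Lemma dom_to0 n P w s t : Hyp n P w s t -> exists v : nat -> R, Un_cv v 0 /\
  (forall k, sum_seqs n k (walk_weight (PS n P t) s) * (1 + INR (S k) * wmax n w) <= v k).
Proof. intros H. destruct H as (HS & Hc & Hs & Ht & Hst & Hr) eqn:HH. clear HH.
  destruct (decay n P t s HS) as [rho [K [Hrho [HK Hd]]]]. repeat split; auto.
  pose proof (wmax_nonneg n w) as Hw0.
  exists (fun k => K * (1 + wmax n w) * (INR (S k) * rho ^ k)). split.
  - destruct (cv_bounded (fun k => K * (1 + wmax n w) * (INR (S k) * rho ^ k)) (K * (1 + wmax n w) * / (1 - rho) ^ 2)) as [l Hl].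
    + intros k. apply Rmult_le_pos. nra. apply Rmult_le_pos. apply pos_INR. apply pow_le; lra.
    + intros N. rewrite sum_f_R0_sumR, sumR_scal, <- sum_f_R0_sumR. apply Rmult_le_compat_l. nra. apply sum_krho; auto.
    + apply Un_cv_unshift. exact (terms_to0 _ _ Hl).
  - intros k. pose proof (Hd k). pose proof (pow_lt rho k (proj1 Hrho)). pose proof (pos_INR k).
    rewrite S_INR.
    assert (1 + (INR k + 1) * wmax n w <= (1 + wmax n w) * (INR k + 1)) by nra.
    pose proof (ww_nonneg_gen n (PS n P t) s).
    assert (0 <= sum_seqs n k (walk_weight (PS n P t) s)) by (apply ss_nonneg; intros; apply (ww_nonneg_gen n); auto; apply PS_nonneg; auto).
    apply Rle_trans with ((K * rho ^ k) * (1 + (INR k + 1) * wmax n w)). apply Rmult_le_compat_r; nra.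
    replace (K * (1 + wmax n w) * ((INR k + 1) * rho ^ k)) with ((K * rho ^ k) * ((1 + wmax n w) * (INR k + 1))) by ring.
    apply Rmult_le_compat_l; nra. Qed.


Lemma Ea_pos a c : 0 < Ea a c.
Proof. apply exp_pos. Qed.

Lemma ln_le0 a : 0 < a <= 1 -> ln a <= 0.
Proof. intros H. destruct (Req_dec a 1). subst; rewrite ln_1; lra. rewrite <- ln_1. left. apply ln_increasing; lra. Qed.

Lemma Ea_le1 a c : 0 < a <= 1 -> 0 <= c -> Ea a c <= 1.
Proof. intros Ha Hc. unfold Ea. rewrite <- exp_0. pose proof (ln_le0 a Ha).
  destruct (Req_dec (c * ln a) 0) as [E|E]. rewrite E; lra. left. apply exp_increasing. nra. Qed.

Lemma adm_Ea a : 0 < a <= 1 -> adm (Ea a).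
Proof. intros Ha c Hc. pose proof (Ea_pos a c). pose proof (Ea_le1 a c Ha Hc). lra. Qed.

Lemma adm_Eac a : 0 < a <= 1 -> adm (fun c => Ea a c * c).
Proof. intros Ha c Hc. pose proof (Ea_pos a c). pose proof (Ea_le1 a c Ha Hc). split; nra. Qed.

Lemma key_ineq a1 a2 c c' : 0 < a1 -> a1 < a2 ->
  (c - c') * (Ea a1 c * Ea a2 c' - Ea a2 c * Ea a1 c') <= 0.
Proof. intros H1 H2. unfold Ea. rewrite <- !exp_plus.
  assert (ln a1 < ln a2) by (apply ln_increasing; lra).
  destruct (Rle_lt_dec c' c).
  - assert (exp (c * ln a1 + c' * ln a2) <= exp (c * ln a2 + c' * ln a1)).
    { destruct (Req_dec c c'). subst. right; f_equal; ring. left. apply exp_increasing. nra. }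
    nra.
  - assert (exp (c * ln a2 + c' * ln a1) <= exp (c * ln a1 + c' * ln a2)).
    { left. apply exp_increasing. nra. }
    nra. Qed.

Lemma sumR_mult m u v : sumR m u * sumR m v = sumR m (fun k => sumR m (fun k' => u k * v k')).
Proof. rewrite Rmult_comm, <- sumR_scal. apply sumR_ext. intros k _.
  rewrite Rmult_comm, <- sumR_scal. auto. Qed.

Lemma ss_mult n k k' f g : sum_seqs n k f * sum_seqs n k' g = sum_seqs n k (fun l => sum_seqs n k' (fun l' => f l * g l')).
Proof. rewrite <- ss_scal_r. apply ss_ext. intros l _. rewrite <- ss_scal. auto. Qed.

Lemma finite_mono n P w s t a1 a2 N : Hyp n P w s t -> 0 < a1 -> a1 < a2 ->
  sum_f_R0 (T n P w s t (fun c => Ea a1 c * c)) N * sum_f_R0 (T n P w s t (Ea a2)) N <=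
  sum_f_R0 (T n P w s t (fun c => Ea a2 c * c)) N * sum_f_R0 (T n P w s t (Ea a1)) N.
Proof. intros H Ha1 Ha12. rewrite !sum_f_R0_sumR, !sumR_mult.
  set (m := S N). set (F' := F P s t). set (c := cst w s t).
  set (Phi := fun k k' => sum_seqs n k (fun l => sum_seqs n k' (fun l' =>
     F' l * F' l' * (c l * Ea a1 (c l) * Ea a2 (c l') - c l * Ea a2 (c l) * Ea a1 (c l'))))).
  assert (E : forall k k', T n P w s t (fun c => Ea a1 c * c) k * T n P w s t (Ea a2) k' -
      T n P w s t (fun c => Ea a2 c * c) k * T n P w s t (Ea a1) k' = Phi k k').
  { intros k k'. unfold T. rewrite !ss_mult. rewrite <- ss_minus. apply ss_ext. intros l _.
    rewrite <- ss_minus. apply ss_ext. intros l' _. fold F' c. ring. }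
  assert (Hsym : forall k k', Phi k k' + Phi k' k <= 0).
  { intros k k'. unfold Phi. rewrite (ss_swap n k' k). rewrite <- ss_plus.
    rewrite <- (ss_const0 n k). apply ss_le. intros l Hl. rewrite <- ss_plus.
    rewrite <- (ss_const0 n k'). apply ss_le. intros l' Hl'.
    pose proof (F_nonneg n P w s t l H Hl). pose proof (F_nonneg n P w s t l' H Hl').
    pose proof (key_ineq a1 a2 (c l) (c l') Ha1 Ha12). fold F' in H0, H1.
    assert (0 <= F' l * F' l') by nra.
    replace (F' l * F' l' * (c l * Ea a1 (c l) * Ea a2 (c l') - c l * Ea a2 (c l) * Ea a1 (c l')) +
      F' l' * F' l * (c l' * Ea a1 (c l') * Ea a2 (c l) - c l' * Ea a2 (c l') * Ea a1 (c l)))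
     with ((F' l * F' l') * ((c l - c l') * (Ea a1 (c l) * Ea a2 (c l') - Ea a2 (c l) * Ea a1 (c l')))) by ring.
    nra. }
  assert (Z0 : forall m, sumR m (fun _ => 0) = 0) by (induction m0; simpl; auto; rewrite IHm0; ring).
  assert (HP : sumR m (fun k => sumR m (fun k' => Phi k k')) <= 0).
  { assert (sumR m (fun k => sumR m (fun k' => Phi k k' + Phi k' k)) <= 0).
    { rewrite <- (Z0 m). apply sumR_le. intros k _. rewrite <- (Z0 m). apply sumR_le. intros; apply Hsym. }
    rewrite (sumR_ext _ _ (fun k => sumR m (fun k' => Phi k k') + sumR m (fun k' => Phi k' k))) in H0
      by (intros; apply sumR_plus).
    rewrite sumR_plus in H0. rewrite (sumR_swap m m (fun k k' => Phi k' k)) in H0. lra. }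
  assert (sumR m (fun k => sumR m (fun k' => T n P w s t (fun c => Ea a1 c * c) k * T n P w s t (Ea a2) k')) -
    sumR m (fun k => sumR m (fun k' => T n P w s t (fun c => Ea a2 c * c) k * T n P w s t (Ea a1) k')) =
    sumR m (fun k => sumR m (fun k' => Phi k k'))).
  { rewrite <- sumR_minus. apply sumR_ext. intros k _. rewrite <- sumR_minus. apply sumR_ext. intros k' _. apply E. }
  lra. Qed.


Lemma XQ n P w s t a : Hyp n P w s t -> 0 < a <= 1 ->
  Un_cv (fun N => sum_f_R0 (T n P w s t (Ea a)) N) (Qabs n P w s t a).
Proof. intros H Ha. destruct (T_cv n P w s t (Ea a) H (adm_Ea a Ha)) as [Z HZ].
  assert (Un_cv (fun N => sum_f_R0 (Q_term n P w s t a) N) Z).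
  { eapply Un_cv_ext; [|exact HZ]. intros N. apply sum_eq. intros; symmetry; apply Q_T. }
  unfold Qabs. rewrite (sv_eq _ _ H0). auto. Qed.

Lemma XC n P w s t a : Hyp n P w s t -> 0 < a <= 1 ->
  Un_cv (fun N => sum_f_R0 (T n P w s t (fun c => Ea a c * c)) N) (series_val (C_term n P w s t a)).
Proof. intros H Ha. destruct (T_cv n P w s t _ H (adm_Eac a Ha)) as [Z HZ].
  assert (Un_cv (fun N => sum_f_R0 (C_term n P w s t a) N) Z).
  { eapply Un_cv_ext; [|exact HZ]. intros N. apply sum_eq. intros; symmetry; apply C_T. }
  rewrite (sv_eq _ _ H0). auto. Qed.

Lemma good_walk n P w s t : Hyp n P w s t -> exists l0, inrn n l0 /\ 0 < F P s t l0.
Proof. intros H. destruct H as (HS & Hc & Hs & Ht & Hst & Hr) eqn:HH. clear HH.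
  destruct (avoid_walk n P s t Hr Hst) as [l0 [Ha Hw]]. exists l0. split.
  apply walk_inr in Hw. apply inr_app in Hw. tauto.
  unfold F. rewrite Ha. apply (walk_pos n); auto. Qed.

Lemma Tpos_term n P w s t h l0 k : Hyp n P w s t -> (forall c, 0 < h c) -> inrn n l0 -> length l0 = k ->
  F P s t l0 * h (cst w s t l0) <= T n P w s t h k.
Proof. intros H Hh Hl Hk. unfold T. apply ss_ge with (f := fun l => F P s t l * h (cst w s t l)); auto.
  intros l Hl'. apply Rmult_le_pos. apply (F_nonneg n P w s t l H Hl'). left; apply Hh. Qed.

Lemma Qabs_pos n P w s t a : Hyp n P w s t -> 0 < a <= 1 -> 0 < Qabs n P w s t a.
Proof. intros H Ha. destruct (good_walk n P w s t H) as [l0 [Hl0 HF]].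
  pose proof (Tpos_term n P w s t (Ea a) l0 (length l0) H (Ea_pos a) Hl0 eq_refl).
  pose proof (Ea_pos a (cst w s t l0)).
  pose proof (term_le_psum (T n P w s t (Ea a)) (length l0) (fun k => T_nonneg n P w s t _ k H (adm_Ea a Ha))).
  pose proof (psum_le_lim (T n P w s t (Ea a)) _ (length l0) (fun k => T_nonneg n P w s t _ k H (adm_Ea a Ha)) (XQ n P w s t a H Ha)).
  nra. Qed.

Lemma part_c n P w s t a1 a2 : Hyp n P w s t -> 0 < a1 -> a1 < a2 -> a2 <= 1 ->
  Uavoid n P w s t a1 <= Uavoid n P w s t a2.
Proof. intros H H1 H12 H2.
  assert (Ha1 : 0 < a1 <= 1) by lra. assert (Ha2 : 0 < a2 <= 1) by lra.
  pose proof (Qabs_pos n P w s t a1 H Ha1). pose proof (Qabs_pos n P w s t a2 H Ha2).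
  assert (series_val (C_term n P w s t a1) * Qabs n P w s t a2 <= series_val (C_term n P w s t a2) * Qabs n P w s t a1).
  { eapply Rle_cv_lim. intros N. apply (finite_mono n P w s t a1 a2 N H H1 H12).
    apply CV_mult; [apply XC|apply XQ]; auto. apply CV_mult; [apply XC|apply XQ]; auto. }
  unfold Uavoid. unfold Rdiv. apply (Rmult_le_reg_r (Qabs n P w s t a1 * Qabs n P w s t a2)). nra.
  replace (series_val (C_term n P w s t a1) * / Qabs n P w s t a1 * (Qabs n P w s t a1 * Qabs n P w s t a2))
    with (series_val (C_term n P w s t a1) * Qabs n P w s t a2) by (field; lra).
  replace (series_val (C_term n P w s t a2) * / Qabs n P w s t a2 * (Qabs n P w s t a1 * Qabs n P w s t a2))
    with (series_val (C_term n P w s t a2) * Qabs n P w s t a1) by (field; lra).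
  auto. Qed.


Lemma left_cont (u : R -> nat -> R) (S : R -> R) (K : nat -> R) :
  (forall a k, 0 < a < 1 -> 0 <= u a k <= u 1 k) ->
  Un_cv (fun N => sum_f_R0 (u 1) N) (S 1) ->
  (forall a, 0 < a < 1 -> Un_cv (fun N => sum_f_R0 (u a) N) (S a)) ->
  (forall N a, 0 < a < 1 -> sum_f_R0 (u 1) N - sum_f_R0 (u a) N <= (/ a - 1) * K N) ->
  limit1_in S (fun a => 0 < a < 1) (S 1) 1.
Proof. intros Hu H1 Ha Hd eps Heps.
  destruct (H1 (eps / 2) ltac:(lra)) as [N HN]. specialize (HN N (le_n N)). unfold Rdist in HN.
  set (KN := Rabs (K N) + 1). assert (HKN : 0 < KN) by (unfold KN; pose proof (Rabs_pos (K N)); lra).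
  exists (Rmin (1/2) (eps / (4 * KN))). split.
  { apply Rmin_pos. lra. apply Rdiv_lt_0_compat; lra. }
  intros x [Hx Hdx]. simpl in Hdx |- *. unfold Rdist in *.
  pose proof (Rmin_l (1/2) (eps / (4 * KN))). pose proof (Rmin_r (1/2) (eps / (4 * KN))).
  rewrite Rabs_left1 in Hdx by lra.
  assert (Hle : S x <= S 1).
  { eapply Rle_cv_lim; [|apply Ha; auto|apply H1]. intros m. apply sum_Rle. intros; apply Hu; auto. }
  assert (Hge : sum_f_R0 (u x) N <= S x).
  { apply psum_le_lim; auto. intros; apply Hu; auto. }
  pose proof (Hd N x Hx).
  set (d := / x - 1) in *.
  assert (Hdx1 : d * x = 1 - x) by (unfold d; field; lra).
  assert (Hd0 : 0 <= d) by nra.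
  assert (Hd2 : d <= 2 * (1 - x)) by nra.
  assert (d * K N <= d * KN) by (apply Rmult_le_compat_l; auto; unfold KN; pose proof (Rle_abs (K N)); lra).
  assert (d * KN <= eps / 2).
  { apply Rle_trans with (2 * (1 - x) * KN). apply Rmult_le_compat_r; lra.
    assert (1 - x < eps / (4 * KN)) by lra.
    assert (2 * (1 - x) * KN < 2 * (eps / (4 * KN)) * KN) by (apply Rmult_lt_compat_r; lra).
    replace (2 * (eps / (4 * KN)) * KN) with (eps / 2) in H5 by (field; lra). lra. }
  rewrite Rabs_left1 by lra. apply Rabs_def2 in HN. lra. Qed.

Lemma one_minus_Ea a c : 0 < a <= 1 -> 0 <= c -> 1 - Ea a c <= (/ a - 1) * c.
Proof. intros Ha Hc. unfold Ea. pose proof (exp_ineq1_le (c * ln a)).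
  pose proof (exp_ineq1_le (ln (/ a))). rewrite exp_ln in H0 by (apply Rinv_0_lt_compat; lra).
  rewrite ln_Rinv in H0 by lra. nra. Qed.

Lemma Ea_1 c : Ea 1 c = 1.
Proof. unfold Ea. rewrite ln_1, Rmult_0_r, exp_0. auto. Qed.

Lemma T_scal n P w s t h al k : T n P w s t (fun c => al * h c) k = al * T n P w s t h k.
Proof. unfold T. rewrite <- ss_scal. apply ss_ext; intros; ring. Qed.

Lemma T_minus n P w s t h1 h2 k : T n P w s t (fun c => h1 c - h2 c) k = T n P w s t h1 k - T n P w s t h2 k.
Proof. unfold T. rewrite <- ss_minus. apply ss_ext; intros; ring. Qed.

Lemma sumf_minus u v N : sum_f_R0 (fun k => u k - v k) N = sum_f_R0 u N - sum_f_R0 v N.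
Proof. rewrite !sum_f_R0_sumR. apply sumR_minus. Qed.

Lemma sumf_scal al u N : sum_f_R0 (fun k => al * u k) N = al * sum_f_R0 u N.
Proof. rewrite !sum_f_R0_sumR. apply sumR_scal. Qed.

Lemma cont_Q n P w s t : Hyp n P w s t ->
  limit1_in (Qabs n P w s t) (fun a => 0 < a < 1) (Qabs n P w s t 1) 1.
Proof. intros H. apply left_cont with (u := fun a => T n P w s t (Ea a))
    (K := fun N => sum_f_R0 (T n P w s t (fun c => c)) N).
  - intros a k Ha. split. apply T_nonneg; auto. apply adm_Ea; lra.
    apply T_le; auto. intros c Hc. rewrite Ea_1. apply Ea_le1; lra.
  - apply XQ; auto; lra.
  - intros; apply XQ; auto; lra.
  - intros N a Ha. rewrite <- sumf_minus, <- sumf_scal. apply sum_Rle. intros k _.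
    rewrite <- T_minus, <- T_scal. apply T_le; auto. intros c Hc. rewrite Ea_1. apply one_minus_Ea; lra. Qed.

Lemma cont_C n P w s t : Hyp n P w s t ->
  limit1_in (fun a => series_val (C_term n P w s t a)) (fun a => 0 < a < 1) (series_val (C_term n P w s t 1)) 1.
Proof. intros H. apply left_cont with (u := fun a => T n P w s t (fun c => Ea a c * c))
    (S := fun a => series_val (C_term n P w s t a))
    (K := fun N => sum_f_R0 (T n P w s t (fun c => c * c)) N).
  - intros a k Ha. split. apply T_nonneg; auto. apply adm_Eac; lra.
    apply T_le; auto. intros c Hc. rewrite Ea_1. pose proof (Ea_le1 a c ltac:(lra) Hc). nra.
  - apply XC; auto; lra.
  - intros; apply XC; auto; lra.
  - intros N a Ha. rewrite <- sumf_minus, <- sumf_scal. apply sum_Rle. intros k _.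
    rewrite <- T_minus, <- T_scal. apply T_le; auto. intros c Hc. rewrite Ea_1.
    pose proof (one_minus_Ea a c ltac:(lra) Hc). nra. Qed.


Lemma sumR_zero m : sumR m (fun _ => 0) = 0.
Proof. induction m; simpl; auto. rewrite IHm; ring. Qed.

Lemma sumR_split_t n X t : (t < n)%nat ->
  sumR n (fun j => if negb (Nat.eqb t j) then X j else 0) + X t = sumR n X.
Proof. intros Ht. rewrite <- (sumR_single n X t Ht). rewrite <- sumR_plus.
  apply sumR_ext. intros j _. destruct (Nat.eqb_spec t j); destruct (Nat.eqb_spec j t); simpl; try lra; congruence. Qed.

Definition Al n P s t k := sum_seqs n k (fun l => if avoids t s l then walk_weight P s l else 0).
Definition Bl n P w s t k := sum_seqs n k (fun l => if avoids t s l then walk_weight P s l * walk_cost w s l else 0).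

Lemma bal1 n P w s t k : Hyp n P w s t -> Al n P s t (S k) + T n P w s t (fun _ => 1) k = Al n P s t k.
Proof. intros H. destruct H as (HS & Hc & Hs & Ht & Hst & Hr) eqn:HH. clear HH.
  unfold Al, T. rewrite ss_snoc. rewrite <- ss_plus. apply ss_ext. intros l Hl.
  unfold F. rewrite (ww_app P s l [t]).
  rewrite (sumR_ext _ _ (fun j => if negb (Nat.eqb t j) then (if avoids t s l then walk_weight P s l * walk_weight P (last l s) [j] else 0) else 0)).
  2:{ intros j _. rewrite avoids_snoc, ww_app. destruct (avoids t s l), (Nat.eqb t j); auto. }
  destruct (avoids t s l).
  - pose proof (sumR_split_t n (fun j => walk_weight P s l * walk_weight P (last l s) [j]) t Ht) as E. cbv beta in E.
    assert (sumR n (fun j => walk_weight P s l * walk_weight P (last l s) [j]) = walk_weight P s l).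
    { simpl walk_weight. rewrite (sumR_ext _ _ (fun j => walk_weight P s l * P (last l s) j)) by (intros; ring).
      rewrite sumR_scal, (proj2 HS). ring. apply inr_last; auto. }
    lra.
  - cbv beta iota. rewrite (sumR_ext n _ (fun _ => 0)) by (intros j _; destruct (negb (Nat.eqb t j)); auto). rewrite sumR_zero. ring. Qed.

Lemma bal2 n P w s t k : Hyp n P w s t ->
  Bl n P w s t (S k) + T n P w s t (fun c => c) k = Bl n P w s t k + H_term n P w s t k.
Proof. intros H. destruct H as (HS & Hc & Hs & Ht & Hst & Hr) eqn:HH. clear HH.
  unfold Bl, T, H_term. rewrite ss_snoc. rewrite <- !ss_plus. apply ss_ext. intros l Hl.
  unfold F, cst. rewrite (ww_app P s l [t]), (wc_app w s l [t]).
  rewrite (sumR_ext _ _ (fun j => if negb (Nat.eqb t j) then (if avoids t s l then walk_weight P s l * walk_weight P (last l s) [j] * (walk_cost w s l + walk_cost w (last l s) [j]) else 0) else 0)).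
  2:{ intros j _. rewrite avoids_snoc, ww_app, wc_app. destruct (avoids t s l), (Nat.eqb t j); auto. }
  rewrite last_cons'. destruct (avoids t s l).
  - pose proof (sumR_split_t n (fun j => walk_weight P s l * walk_weight P (last l s) [j] * (walk_cost w s l + walk_cost w (last l s) [j])) t Ht) as E. cbv beta in E.
    assert (sumR n (fun j => walk_weight P s l * walk_weight P (last l s) [j] * (walk_cost w s l + walk_cost w (last l s) [j]))
       = walk_weight P s l * walk_cost w s l + sumR n (fun j => walk_weight P s (l ++ [j]) * w (last l s) j)).
    { rewrite (sumR_ext _ _ (fun j => (walk_weight P s l * walk_cost w s l) * P (last l s) j + walk_weight P s (l ++ [j]) * w (last l s) j)).
      rewrite sumR_plus, sumR_scal, (proj2 HS). ring. apply inr_last; auto.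
      intros j _. rewrite ww_app. simpl walk_weight. simpl walk_cost. ring. }
    cbv beta iota. lra.
  - cbv beta iota. rewrite (sumR_ext n _ (fun _ => 0)) by (intros j _; destruct (negb (Nat.eqb t j)); auto). rewrite sumR_zero. ring. Qed.

Lemma telescope (a q h : nat -> R) N : (forall k, a (S k) + q k = a k + h k) ->
  sum_f_R0 q N = a O + sum_f_R0 h N - a (S N).
Proof. intros E. induction N; simpl. pose proof (E O). lra. rewrite IHN. pose proof (E (S N)). lra. Qed.

Lemma av_le_PS n P t s x l : Hstoch n P -> (t < n)%nat -> (forall x, reachable n P s x -> reachable n P x t) ->
  reachable n P s x -> (x < n)%nat -> inrn n l ->
  (if avoids t x l then walk_weight P x l else 0) <= walk_weight (PS n P t) x l.
Proof. intros HS Ht Hb. revert x; induction l as [|y l IH]; intros x Hsx Hx Hl.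
  - simpl. destruct avoids; lra.
  - inversion Hl; subst. rewrite avoids_cons.
    pose proof (ww_nonneg_gen n (PS n P t) x (y :: l) (PS_nonneg n P t HS) Hx Hl) as Hnn.
    destruct (Nat.eqb t x); cbn [negb andb]; [lra|].
    destruct (avoids t y l) eqn:Ey; [|lra]. cbn [walk_weight]. unfold PS at 1.
    pose proof (ww_nonneg_gen n (PS n P t) y l (PS_nonneg n P t HS) H1 H2) as Hnn2.
    destruct (proj1 HS x y Hx H1) as [Hp|Hp].
    + assert (Hsy : reachable n P s y) by (eapply rt_trans; [exact Hsx| apply rt_step; repeat split; auto]).
      assert (y <> t).
      { intro E; subst y. unfold avoids in Ey. simpl in Ey. rewrite Nat.eqb_refl in Ey. discriminate. }
      rewrite cS_1. 2:{ split; auto. }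
      pose proof (IH y Hsy H1 H2) as HI. rewrite Ey in HI. cbv beta iota in HI. fold (PS n P t).
      apply Rle_trans with (P x y * walk_weight (PS n P t) y l). apply Rmult_le_compat_l; lra. lra.
    + rewrite <- Hp. lra. Qed.

Lemma Al_Bl_le n P w s t k : Hyp n P w s t -> (forall x, reachable n P s x -> reachable n P x t) ->
  0 <= Al n P s t k <= sum_seqs n k (walk_weight (PS n P t) s) * (1 + INR (S k) * wmax n w) /\ 0 <= Bl n P w s t k <= sum_seqs n k (walk_weight (PS n P t) s) * (1 + INR (S k) * wmax n w).
Proof. intros H Hb. destruct H as (HS & Hc & Hs & Ht & Hst & Hr) eqn:HH. clear HH.
  pose proof (wmax_nonneg n w). pose proof (pos_INR (S k)).
  assert (HA : 0 <= sum_seqs n k (walk_weight (PS n P t) s)).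
  { apply ss_nonneg. intros. apply (ww_nonneg_gen n); auto. apply PS_nonneg; auto. }
  repeat split.
  - apply ss_nonneg. intros l Hl. destruct avoids; [apply (ww_nonneg n); auto|lra].
  - eapply Rle_trans. apply ss_le. intros l Hl. apply (av_le_PS n P t s s l HS Ht Hb (rt_refl _ _ _) Hs Hl).
    assert (0 <= INR (S k) * wmax n w) by nra. nra.
  - apply ss_nonneg. intros l Hl. destruct avoids; [apply (wc_nonneg n); auto|lra].
  - rewrite <- ss_scal_r. apply ss_le_len. intros l Hl Hlen.
    pose proof (av_le_PS n P t s s l HS Ht Hb (rt_refl _ _ _) Hs Hl).
    pose proof (ww_nonneg_gen n (PS n P t) s l (PS_nonneg n P t HS) Hs Hl).
    destruct (avoids t s l); cbv beta iota in *; [|apply Rmult_le_pos; [lra|nra]].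
    pose proof (cost_bound n w s l Hs Hl). rewrite Hlen in H4. pose proof (Rle_abs (walk_cost w s l)).
    pose proof (ww_nonneg n P s l HS Hs Hl). rewrite S_INR in *. pose proof (pos_INR k).
    assert (walk_weight P s l * walk_cost w s l <= walk_weight P s l * (INR k * wmax n w)) by (apply Rmult_le_compat_l; lra).
    assert (walk_weight P s l * (INR k * wmax n w) <= walk_weight (PS n P t) s l * (INR k * wmax n w)) by (apply Rmult_le_compat_r; nra).
    assert (walk_weight (PS n P t) s l * (INR k * wmax n w) <= walk_weight (PS n P t) s l * (1 + (INR k + 1) * wmax n w)) by (apply Rmult_le_compat_l; nra).
    lra. Qed.

Lemma squeeze (u v : nat -> R) : (forall N, 0 <= u N <= v N) -> Un_cv v 0 -> Un_cv u 0.
Proof. intros H Hv eps He. destruct (Hv eps He) as [N HN]. exists N. intros m Hm.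
  specialize (HN m Hm). specialize (H m). unfold Rdist in *. rewrite Rminus_0_r in *.
  rewrite Rabs_right in * by lra. lra. Qed.

Lemma part_b_eq n P w s t : Hyp n P w s t -> (forall x, reachable n P s x -> reachable n P x t) ->
  Qabs n P w s t 1 = 1 /\ series_val (C_term n P w s t 1) = hitting_cost n P w s t.
Proof. intros H Hb.
  destruct (dom_to0 n P w s t H) as [v [Hv0 Hv]].
  assert (HA0 : Un_cv (fun N => Al n P s t (S N)) 0).
  { apply squeeze with (fun N => v (S N)). intros N. pose proof (Al_Bl_le n P w s t (S N) H Hb). pose proof (Hv (S N)). lra.
    apply Un_cv_shift; auto. }
  assert (HB0 : Un_cv (fun N => Bl n P w s t (S N)) 0).
  { apply squeeze with (fun N => v (S N)). intros N. pose proof (Al_Bl_le n P w s t (S N) H Hb). pose proof (Hv (S N)). lra.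
    apply Un_cv_shift; auto. }
  destruct H as (HS & Hc & Hs & Ht & Hst & Hr) eqn:HH.
  assert (Al0 : Al n P s t O = 1).
  { unfold Al. simpl. rewrite avoids_nil. destruct (Nat.eqb_spec t s); [congruence|]. auto. }
  assert (Bl0 : Bl n P w s t O = 0).
  { unfold Bl. simpl. rewrite avoids_nil. destruct (Nat.eqb_spec t s); [congruence|]. simpl. ring. }
  split.
  - assert (Un_cv (fun N => sum_f_R0 (T n P w s t (Ea 1)) N) 1).
    { apply (Un_cv_ext (fun N => 1 - Al n P s t (S N))). 2:{ assert (X := CV_minus _ _ _ _ (CV_const 1) HA0). replace (1 - 0) with 1 in X by ring. exact X. }
      intros N. cbv beta. rewrite (telescope (Al n P s t) (T n P w s t (Ea 1)) (fun _ => 0)).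
      rewrite Al0, sum_f_R0_sumR, sumR_zero. ring.
      intros k. rewrite (T_ext _ _ _ _ _ (Ea 1) (fun _ => 1)) by apply Ea_1. rewrite bal1; auto. ring. }
    eapply UL_sequence. apply XQ; auto; lra. auto.
  - assert (HC := XC n P w s t 1 H ltac:(lra)).
    symmetry. apply sv_eq. apply (Un_cv_ext (fun N => sum_f_R0 (T n P w s t (fun c => Ea 1 c * c)) N + Bl n P w s t (S N))).
    2:{ assert (X := CV_plus _ _ _ _ HC HB0). replace (series_val (C_term n P w s t 1) + 0) with (series_val (C_term n P w s t 1)) in X by ring. exact X. }
    intros N. cbv beta. rewrite (telescope (Bl n P w s t) (T n P w s t (fun c => Ea 1 c * c)) (H_term n P w s t)).
    rewrite Bl0. ring.
    intros k. rewrite (T_ext _ _ _ _ _ (fun c => Ea 1 c * c) (fun c => c)) by (intros; rewrite Ea_1; ring).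
    apply bal2; auto. Qed.


Lemma T_le_P n P w s t (Pr : R -> Prop) h1 h2 k : Hyp n P w s t ->
  (forall l, inrn n l -> F P s t l <> 0 -> Pr (cst w s t l)) ->
  (forall c, Pr c -> h1 c <= h2 c) -> T n P w s t h1 k <= T n P w s t h2 k.
Proof. intros H HP Hh. apply ss_le. intros l Hl. pose proof (F_nonneg n P w s t l H Hl).
  destruct (Req_dec (F P s t l) 0) as [Z|Z]. rewrite Z; lra.
  apply Rmult_le_compat_l; auto. Qed.

Lemma cv_lin u v x y al be : Un_cv u x -> Un_cv v y -> Un_cv (fun N => al * u N + be * v N) (al * x + be * y).
Proof. intros Hu Hv. apply CV_plus; apply CV_mult; auto; apply CV_const. Qed.

Lemma Ea_split a L c : Ea a c = Ea a L * Ea a (c - L).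
Proof. unfold Ea. rewrite <- exp_plus. f_equal. ring. Qed.

Lemma pt_ineq a x eps : 0 < a < 1 -> 0 <= x -> 0 < eps -> Ea a x * x <= eps + Ea a eps * x.
Proof. intros Ha Hx He. pose proof (Ea_pos a eps). pose proof (Ea_pos a x).
  pose proof (Ea_le1 a x ltac:(lra) Hx). pose proof (ln_le0 a ltac:(lra)).
  destruct (Rle_lt_dec x eps).
  - nra.
  - assert (Ea a x <= Ea a eps).
    { unfold Ea. destruct (Req_dec (ln a) 0) as [E|E]. rewrite E, !Rmult_0_r; lra.
      left. apply exp_increasing. nra. }
    nra. Qed.

Lemma lowerL n P w s t L : Hyp n P w s t -> shortest_cost n P w s t L ->
  forall l, inrn n l -> F P s t l <> 0 -> L <= cst w s t l.
Proof. intros H [_ Hmin] l Hl HF. destruct (F_walk n P w s t l H Hl HF) as [_ Hw].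
  destruct (erase n P w s t (proj1 (proj2 H)) (length (l ++ [t])) (l ++ [t]) (le_n _) Hw) as [l' [Hp Hc]].
  rewrite last_app'. auto.
  pose proof (Hmin l' Hp). unfold cst. lra. Qed.

Lemma bestwalk n P w s t L : Hyp n P w s t -> shortest_cost n P w s t L ->
  exists l0, inrn n l0 /\ 0 < F P s t l0 /\ cst w s t l0 = L /\ 0 <= L.
Proof. intros H [[l [[Hw [Hl Hnd]] Hc]] _]. destruct H as (HS & Hcs & Hs & Ht & Hst & Hr) eqn:HH.
  destruct l as [|x l']. simpl in Hl. congruence.
  destruct (exists_last (l := x :: l') ltac:(discriminate)) as [l0 [a E]]. rewrite E in *.
  rewrite last_cons', last_app' in Hl. simpl in Hl. subst a.
  exists l0. assert (Hin := walk_inr n P s _ Hw). apply inr_app in Hin.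
  split; [tauto|]. split; [|split].
  - unfold F. replace (avoids t s l0) with true. apply (walk_pos n); auto.
    symmetry. unfold avoids. apply negb_true_iff. destruct (existsb (Nat.eqb t) (s :: l0)) eqn:Ex; auto.
    apply existsb_exists in Ex. destruct Ex as [y [Hy Ey]]. apply Nat.eqb_eq in Ey. subst y.
    change (s :: l0 ++ [t]) with ((s :: l0) ++ t :: []) in Hnd. apply NoDup_remove_2 in Hnd.
    rewrite app_nil_r in Hnd. contradiction.
  - unfold cst. auto.
  - rewrite <- Hc. apply cost_nonneg with n P; auto. Qed.

Lemma T_zero n P w s t k : T n P w s t (fun _ => 0) k = 0.
Proof. unfold T. rewrite (ss_ext _ _ _ (fun _ => 0)) by (intros; ring). apply ss_const0. Qed.

Lemma bound_a n P w s t L : Hyp n P w s t -> shortest_cost n P w s t L ->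
  exists m0, 0 < m0 /\ forall a eps, 0 < a < 1 -> 0 < eps ->
  0 <= Uavoid n P w s t a - L <=
     (eps * Qabs n P w s t 1 + Ea a eps * Rabs (series_val (C_term n P w s t 1) - L * Qabs n P w s t 1)) / m0.
Proof. intros H HL. destruct (bestwalk n P w s t L H HL) as [l0 [Hl0 [HF0 [Hc0 HL0]]]].
  exists (F P s t l0). split; auto. intros a eps Ha He.
  assert (Ha' : 0 < a <= 1) by lra.
  set (m0 := F P s t l0) in *.
  set (Z1 := Qabs n P w s t 1). set (C1 := series_val (C_term n P w s t 1)).
  set (Za := Qabs n P w s t a). set (Ca := series_val (C_term n P w s t a)).
  set (EL := Ea a L). set (Ee := Ea a eps).
  assert (HEL : 0 < EL) by apply Ea_pos. assert (HEe : 0 < Ee) by apply Ea_pos.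
  assert (HZa : 0 < Za) by (apply Qabs_pos; auto).
  pose proof (lowerL n P w s t L H HL) as Hlow.
  assert (HQa := XQ n P w s t a H Ha'). assert (HCa := XC n P w s t a H Ha').
  assert (HQ1 := XQ n P w s t 1 H ltac:(lra)). assert (HC1 := XC n P w s t 1 H ltac:(lra)).
  fold Za in HQa. fold Ca in HCa. fold Z1 in HQ1. fold C1 in HC1.
  assert (Hu := cv_lin _ _ _ _ 1 (- L) HCa HQa).
  assert (D0 : 0 <= 1 * Ca + - L * Za).
  { eapply Rle_cv_lim; [|apply CV_const|exact Hu]. intros N. cbv beta.
    rewrite <- sum_f_lin. apply cond_pos_sum. intros k. rewrite <- T_lin. rewrite <- (T_zero n P w s t k).
    apply T_le_P with (Pr := fun c => L <= c); auto. intros c Hc.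
    pose proof (Ea_pos a c). nra. }
  set (al := EL * (eps - Ee * L)). set (be := EL * Ee).
  assert (Hv := cv_lin _ _ _ _ al be HQ1 HC1).
  assert (D1 : 1 * Ca + - L * Za <= al * Z1 + be * C1).
  { eapply Rle_cv_lim; [|exact Hu|exact Hv]. intros N. cbv beta.
    rewrite <- !sum_f_lin. apply sum_Rle. intros k _. rewrite <- !T_lin.
    apply T_le_P with (Pr := fun c => L <= c); auto. intros c Hc.
    rewrite Ea_1. rewrite (Ea_split a L c). fold EL. unfold al, be.
    pose proof (pt_ineq a (c - L) eps Ha ltac:(lra) He). fold Ee in H0.
    assert (EL * (Ea a (c - L) * (c - L)) <= EL * (eps + Ee * (c - L))) by (apply Rmult_le_compat_l; lra).
    nra. }
  assert (HZm : m0 * EL <= Za).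
  { pose proof (Tpos_term n P w s t (Ea a) l0 (length l0) H (Ea_pos a) Hl0 eq_refl).
    pose proof (term_le_psum (T n P w s t (Ea a)) (length l0) (fun k => T_nonneg n P w s t _ k H (adm_Ea a Ha'))).
    pose proof (psum_le_lim (T n P w s t (Ea a)) _ (length l0) (fun k => T_nonneg n P w s t _ k H (adm_Ea a Ha')) HQa).
    rewrite Hc0 in H0. fold m0 EL in H0. lra. }
  set (K := Rabs (C1 - L * Z1)).
  assert (HR : al * Z1 + be * C1 <= EL * (eps * Z1 + Ee * K)).
  { unfold al, be. assert (C1 - L * Z1 <= K) by apply Rle_abs.
    assert (EL * Ee * (C1 - L * Z1) <= EL * Ee * K) by (apply Rmult_le_compat_l; nra). nra. }
  unfold Uavoid. fold Ca Za.
  assert (Hdiv : Ca / Za - L = (1 * Ca + - L * Za) / Za) by (field; lra).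
  rewrite Hdiv. split.
  - apply Rmult_le_pos; auto. left; apply Rinv_0_lt_compat; auto.
  - set (D := 1 * Ca + - L * Za) in *. set (R' := eps * Z1 + Ee * K) in *.
    assert (0 <= R') by nra.
    unfold Rdiv. apply (Rmult_le_reg_r (Za * m0)). nra.
    replace (D * / Za * (Za * m0)) with (D * m0) by (field; lra).
    replace (R' * / m0 * (Za * m0)) with (R' * Za) by (field; lra).
    assert (D * m0 <= EL * R' * m0) by (apply Rmult_le_compat_r; lra).
    assert (EL * R' * m0 <= R' * Za) by nra. lra. Qed.

Lemma part_a n P w s t L : Hyp n P w s t -> shortest_cost n P w s t L ->
  limit1_in (Uavoid n P w s t) (fun a => 0 < a < 1) L 0.
Proof. intros H HL. destruct (bound_a n P w s t L H HL) as [m0 [Hm0 Hb]].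
  set (Z1 := Qabs n P w s t 1). set (K := Rabs (series_val (C_term n P w s t 1) - L * Qabs n P w s t 1)).
  assert (HZ1 : 0 < Z1) by (apply Qabs_pos; auto; lra). assert (HK : 0 <= K) by apply Rabs_pos.
  intros eta Heta.
  set (eps := eta * m0 / (2 * (Z1 + 1))). set (tau := eta * m0 / (2 * (K + 1))).
  assert (Heps : 0 < eps) by (unfold eps; apply Rdiv_lt_0_compat; nra).
  assert (Htau : 0 < tau) by (unfold tau; apply Rdiv_lt_0_compat; nra).
  exists (Rmin 1 (exp (ln tau / eps))). split. apply Rmin_pos; [lra|apply exp_pos].
  intros a [Ha Hda]. simpl in Hda |- *. unfold Rdist in *. rewrite Rminus_0_r in Hda. rewrite Rabs_right in Hda by lra.
  pose proof (Rmin_r 1 (exp (ln tau / eps))).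
  assert (HEe : Ea a eps < tau).
  { unfold Ea. rewrite <- (exp_ln tau) by auto. apply exp_increasing.
    assert (ln a < ln tau / eps). { rewrite <- (ln_exp (ln tau / eps)). apply ln_increasing; lra. }
    apply (Rmult_lt_compat_l eps) in H1; auto. unfold Rdiv in H1. rewrite Rmult_comm.
    replace (eps * (ln tau * / eps)) with (ln tau) in H1 by (field; lra). lra. }
  destruct (Hb a eps Ha Heps) as [B0 B1]. fold Z1 K in B1.
  rewrite Rabs_right by lra.
  assert (eps * Z1 < eta * m0 / 2).
  { unfold eps. unfold Rdiv. replace (eta * m0 * / (2 * (Z1 + 1)) * Z1) with ((eta * m0 / 2) * (Z1 / (Z1 + 1))) by (field; lra).
    assert (Z1 / (Z1 + 1) < 1). { apply (Rmult_lt_reg_r (Z1 + 1)). lra. unfold Rdiv. rewrite Rmult_assoc, Rinv_l; lra. }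
    assert (0 < eta * m0 / 2) by nra. unfold Rdiv in *. nra. }
  assert (Ea a eps * K <= eta * m0 / 2 * (K / (K + 1))).
  { replace (eta * m0 / 2 * (K / (K + 1))) with (tau * K) by (unfold tau; field; lra).
    pose proof (Ea_pos a eps). nra. }
  assert (K / (K + 1) < 1). { apply (Rmult_lt_reg_r (K + 1)). lra. unfold Rdiv. rewrite Rmult_assoc, Rinv_l; lra. }
  assert (eps * Z1 + Ea a eps * K < eta * m0).
  { assert (eta * m0 / 2 * (K / (K + 1)) <= eta * m0 / 2) by (assert (0 < eta * m0 / 2) by nra; unfold Rdiv in *; nra). lra. }
  apply Rle_lt_trans with ((eps * Z1 + Ea a eps * K) / m0); auto.
  apply (Rmult_lt_reg_r m0); auto. unfold Rdiv. rewrite Rmult_assoc, Rinv_l by lra. lra. Qed.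


Theorem mainTheorem2 (n : nat) (P w : nat -> nat -> R) (s t : nat)
  (HPnn : forall i j, (i < n)%nat -> (j < n)%nat -> 0 <= P i j)
  (HProw : forall i, (i < n)%nat -> sumR n (fun j => P i j) = 1)
  (Hw : forall i j, (i < n)%nat -> (j < n)%nat -> 0 < P i j -> 0 < w i j)
  (Hs : (s < n)%nat) (Ht : (t < n)%nat) (Hst : s <> t)
  (Hpath : reachable n P s t) :
  (* (a) *)
  (forall L, shortest_cost n P w s t L ->
     limit1_in (Uavoid n P w s t) (fun a => 0 < a < 1) L 0)
  /\
  (* (b) *)
  ((forall x, reachable n P s x -> reachable n P x t) ->
     Uavoid n P w s t 1 = hitting_cost n P w s t /\
     limit1_in (Uavoid n P w s t) (fun a => 0 < a < 1) (hitting_cost n P w s t) 1)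
  /\
  (* (c) *)
  (forall a1 a2, 0 < a1 -> a1 < a2 -> a2 <= 1 ->
     Uavoid n P w s t a1 <= Uavoid n P w s t a2).
Proof.
  assert (H : Hyp n P w s t) by (repeat split; auto).
  split; [|split].
  - intros L HL. apply part_a; auto.
  - intros Hb. destruct (part_b_eq n P w s t H Hb) as [HQ HC].
    split.
    + unfold Uavoid. rewrite HQ, HC. field.
    + change (limit1_in (fun a => series_val (C_term n P w s t a) * / Qabs n P w s t a) (fun a => 0 < a < 1) (hitting_cost n P w s t) 1).
      replace (hitting_cost n P w s t) with (series_val (C_term n P w s t 1) * / Qabs n P w s t 1)
        by (rewrite HQ, HC; field).
      apply limit_mul. apply cont_C; auto. apply limit_inv. apply cont_Q; auto. rewrite HQ; apply R1_neq_R0.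
  - intros a1 a2 H1 H12 H2. apply part_c; auto.
Qed.
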